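(* Let $G$ be a profinite group such that the set $FC(G)=\{g\in G : g \text{ has only finitely many conjugates in } G\}$ is dense in $G$. Then: (1) if $g\in FC(G)$, then the closed subgroup $[G,g]$ is finite; (2) if $g\in FC(G)$ is an element of finite order, then the closed subgroup $\langle g^G\rangle$ topologically generated by the conjugacy class of $g$ is finite.
   Context: For subsets $X,Y$ of a profinite group, $[X,Y]$ denotes the closed subgroup topologically generated by all commutators $[x,y]$ with $x\in X$, $y\in Y$; $[G,g]$ means $[G,\{g\}]$. $g^G$ denotes the conjugacy class of $g$ in $G$. *)

(* Defs.v *)
From HB Require Import structures.
From mathcomp Require Import all_boot all_order monoid.
From mathcomp Require Import all_classical.
From mathcomp Require Import topology.
Set Implicit Arguments. Unset Strict Implicit. Unset Printing Implicit Defensive.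

Local Open Scope classical_set_scope.
Local Open Scope group_scope.

HB.structure Definition TopGroup := {G of Group G & Topological G}.
Notation topGroupType := TopGroup.type.

Definition profinite (G : topGroupType) : Prop :=
  [/\ continuous (fun p : G * G => p.1 * p.2),
      continuous (fun x : G => x^-1),
      compact [set: G],
      hausdorff_space G &
      totally_disconnected [set: G]].

Definition conj_class (G : topGroupType) (g : G) : set G :=
  [set g ^ x | x in [set: G]].

Definition FC (G : topGroupType) : set G :=
  [set g | finite_set (conj_class g)].

Definition is_subgroup (G : topGroupType) (H : set G) : Prop :=
  [/\ H 1, (forall x y, H x -> H y -> H (x * y)) & (forall x, H x -> H x^-1)].

Definition topgen (G : topGroupType) (S : set G) : set G :=
  \bigcap_(H in [set H : set G | is_subgroup H /\ closed H /\ S `<=` H]) H.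

Definition comm_sub (G : topGroupType) (X Y : set G) : set G :=
  topgen [set [~ x, y] | x in X & y in Y].

Definition finite_order (G : topGroupType) (g : G) : Prop :=
  exists n : nat, (0 < n)%N /\ g ^+ n = 1.
Arguments FC : clear implicits.

(* Main.v *)
Require Import Defs.
From HB Require Import structures.
From mathcomp Require Import all_boot all_order monoid.
From mathcomp Require Import all_classical.
From mathcomp Require Import topology.
From mathcomp Require Import zify.
Set Implicit Arguments. Unset Strict Implicit. Unset Printing Implicit Defensive.

Local Open Scope classical_set_scope.
Local Open Scope group_scope.

Ltac sh := match goal with |- ?g => idtac g end.
Section Dietz.
Variable G : groupType.
Implicit Types x y : G.

Definition wprod (w : seq G) : G := \prod_(x <- w) x.

Lemma wprod_cat w1 w2 : wprod (w1 ++ w2) = wprod w1 * wprod w2.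
Proof. by rewrite /wprod big_cat. Qed.

Lemma wprod_cons x w : wprod (x :: w) = x * wprod w.
Proof. by rewrite /wprod big_cons. Qed.

Lemma wprod_nseq x k : wprod (nseq k x) = x ^+ k.
Proof.
elim: k => [|k IH]; first by rewrite /wprod big_nil expg0.
by rewrite /= wprod_cons IH expgS.
Qed.

Lemma conjg_self_pow x k : x ^ (x ^+ k) = x.
Proof.
by rewrite conjgE (commuteX k (commute_refl x)) mulgA mulVg mul1g.
Qed.

Variable xs : seq G.
Hypothesis xs_conj : forall x y, x \in xs -> x ^ y \in xs.

Lemma collect x w : all (mem xs) w ->
  exists w', [/\ all (mem xs) w', x \notin w',
     (size w' + count_mem x w = size w)%N &
     wprod w = x ^+ (count_mem x w) * wprod w'].
Proof.
elim: w => [|a w IH] /=.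
  by move=> _; exists [::]; rewrite /wprod big_nil expg0 mulg1.
case/andP=> aX /IH [w' [w'X xw' sz pw]].
have [ax|ax] := eqVneq a x.
  subst a; exists w'; split => //; first by rewrite add1n addnS sz.
  by rewrite wprod_cons pw add1n expgS mulgA.
exists (a ^ (x ^+ count_mem x w) :: w'); split.
- by rewrite /= xs_conj.
- rewrite inE negb_or xw' andbT; apply/eqP => h.
  have : a ^ (x ^+ count_mem x w) = x ^ (x ^+ count_mem x w).
    by rewrite conjg_self_pow.
  by move/conjg_inj => e; rewrite e eqxx in ax.
- by rewrite /= add0n addSn sz.
- by rewrite wprod_cons pw add0n wprod_cons mulgA [a * _]conjgC -mulgA.
Qed.


Lemma size_le_sum (s w : seq G) : all (mem s) w ->
  (size w <= \sum_(x <- s) count_mem x w)%N.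
Proof.
elim: w => [|a w IH] //= /andP [aS /IH le].
rewrite big_split /= -add1n leq_add //.
elim: (s) aS => [|b s' IHs] //; rewrite inE big_cons.
case/orP => [/eqP ->|/IHs h]; first by rewrite eqxx.
by rewrite (leq_trans h) // leq_addl.
Qed.

Variable N : nat.
Hypothesis N_gt0 : (0 < N)%N.
Hypothesis xs_exp : forall x, x \in xs -> x ^+ N = 1.

Lemma dietz_bound w : all (mem xs) w -> exists w',
  [/\ all (mem xs) w', (size w' <= size xs * N)%N & wprod w' = wprod w].
Proof.
have [m] := ubnP (size w); elim: m w => // m IH w szw wX.
have [small|big] := leqP (size w) (size xs * N).
  by exists w.
have [x xX cx] : exists2 x, x \in xs & (N <= count_mem x w)%N.
  apply/hasP; apply/negPn/negP => /hasPn h.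
  have := size_le_sum wX.
  have : (\sum_(x <- xs) count_mem x w <= \sum_(x <- xs) N)%N.
    rewrite big_seq [X in (_ <= X)%N]big_seq; apply: leq_sum => i /h.
    by rewrite -ltnNge => /ltnW.
  rewrite big_const_seq count_predT iter_addn_0 mulnC => le1 le2.
  by move: (leq_trans le2 le1); rewrite leqNgt big.
have [w' [w'X xw' sz pw]] := collect x wX.
have s1 : (size (nseq (count_mem x w - N) x ++ w') < m)%N.
  rewrite size_cat size_nseq -ltnS (leq_trans _ szw) // ltnS -sz.
  have := N_gt0; lia.
have s2 : all (mem xs) (nseq (count_mem x w - N) x ++ w').

  by rewrite all_cat w'X andbT; apply/allP => y /nseqP [-> _].
have [w'' [h1 h2 h3]] := IH _ s1 s2.
exists w''; split => //; rewrite h3 pw wprod_cat wprod_nseq.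
by rewrite -{2}(subnK cx) expgnDr xs_exp // mulg1.
Qed.

Definition PB k := [set wprod w | w in [set w | all (mem xs) w /\ (size w <= k)%N]].
Definition Pw := [set wprod w | w in [set w | all (mem xs) w]].

Lemma finite_PB k : finite_set (PB k).
Proof.
elim: k => [|k IH].
  apply: (sub_finite_set _ (finite_set1 (1 : G))).
  by move=> _ [[|a w] [_ sz] <-] //; rewrite /wprod big_nil.
apply: (sub_finite_set (B := PB k `|` [set x * y | x in [set` xs] & y in PB k])).
  move=> _ [w [wX sw] <-]; have [sw'|] := leqP (size w) k.
    by left; exists w.
  case: w wX sw => [|a w] //= /andP [aX wX] sw1 sw2; right.
  exists a => //; exists (wprod w); last by rewrite wprod_cons.
  by exists w.
by rewrite finite_setU; split => //; apply: finite_image2 => //; apply: finite_seq.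
Qed.

Lemma Pw_finite : finite_set Pw.
Proof.
apply: (sub_finite_set _ (finite_PB (size xs * N))).
move=> _ [w wX <-]; have [w' [h1 h2 h3]] := dietz_bound wX.
by exists w'.
Qed.

Lemma Pw1 : Pw 1.
Proof. by exists [::] => //; rewrite /wprod big_nil. Qed.

Lemma PwM x y : Pw x -> Pw y -> Pw (x * y).
Proof.
move=> [w wX <-] [w' w'X <-]; exists (w ++ w'); last by rewrite wprod_cat.
by rewrite /= all_cat; apply/andP.
Qed.

Lemma Pw_xs x : x \in xs -> Pw x.
Proof. by move=> xX; exists [:: x]; rewrite /= ?xX // wprod_cons /wprod big_nil mulg1. Qed.

Lemma PwV x : Pw x -> Pw x^-1.
Proof.
move=> [w wX <-]; elim: w wX => [|a w IH] /=.
  by move=> _; rewrite /wprod big_nil invg1; apply: Pw1.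
case/andP => aX /IH h; rewrite wprod_cons invgM; apply: PwM => //.
have e : a * a ^+ N.-1 = 1 by rewrite -expgS prednK // xs_exp.
rewrite (mulg1_eq e) -wprod_nseq; exists (nseq N.-1 a) => //.
by apply/allP => y /nseqP [-> _].
Qed.

End Dietz.

Section Transfer.
Variable G : groupType.
Implicit Types x y z u v h : G.

Lemma commute_prod_seq (I : eqType) (s : seq I) (F : I -> G) x :
  (forall i, i \in s -> commute x (F i)) -> commute x (\prod_(i <- s) F i).
Proof. by move=> h; rewrite big_seq; apply: commute_prod. Qed.

Lemma perm_prod_commute (I : eqType) (s t : seq I) (F : I -> G) :
  perm_eq s t -> (forall i j, i \in s -> j \in s -> commute (F i) (F j)) ->
  \prod_(i <- s) F i = \prod_(i <- t) F i.
Proof.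
elim: s t => [|x s IH] t.
  by move=> /perm_size/esym/size0nil ->.
move=> pst cF.
have xt : x \in t by rewrite -(perm_mem pst) mem_head.
case/splitPr: xt pst => t1 t2 pst.
have p2 : perm_eq s (t1 ++ t2).
  rewrite -(perm_cons x); apply: (perm_trans pst); exact/permPl/(perm_catCA t1 [:: x] t2).
rewrite big_cons (IH _ p2); last first.
  by move=> i j iS jS; apply: cF; rewrite inE ?iS ?jS orbT.
rewrite !big_cat big_cons /= !mulgA; congr (_ * _).
have : commute (F x) (\prod_(i <- t1) F i).
  apply: commute_prod_seq => i it1; apply: cF; first exact: mem_head.
  by rewrite (perm_mem pst) mem_cat it1.
by [].
Qed.

Lemma prod_const_seq (I : Type) (s : seq I) z : \prod_(k <- s) z = z ^+ size s.
Proof. by elim: s => [|k s IH]; rewrite ?big_nil ?expg0 // big_cons IH expgS. Qed.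

Lemma conj_fix x w : x ^ w = x <-> commute w x.
Proof.
rewrite conjgE; split => h; rewrite /commute.
  by rewrite -{1}h mulVKg.
by rewrite -h mulKg.
Qed.

Lemma conj_eq x u v : x ^ u = x ^ v <-> commute (u * v^-1) x.
Proof.
rewrite -conj_fix conjgM; split => [->|h]; first by rewrite conjgK.
by rewrite -[x ^ u](conjgKV v) h.
Qed.

Variables a b : G.
Definition W z := commute z a /\ commute z b.
Definition Hc h := forall z, W z -> commute h z.
Definition kap h := (a ^ h, b ^ h).

Lemma kapP u v : kap u = kap v <-> W (u * v^-1).
Proof.
rewrite /kap /W; split => [[/conj_eq h1 /conj_eq h2]|[/conj_eq h1 /conj_eq h2]] //.
by rewrite h1 h2.
Qed.

Lemma W1 : W 1.
Proof. by split; apply: commute_sym; apply: commute1. Qed.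
Lemma WM u v : W u -> W v -> W (u * v).
Proof.
move=> [u1 u2] [v1 v2]; split; apply: commute_sym; apply: commuteM;
  exact: commute_sym.
Qed.
Lemma WV u : W u -> W u^-1.
Proof.
by move=> [u1 u2]; split; apply: commute_sym; apply: commuteV; apply: commute_sym.
Qed.
Lemma Hc1 : Hc 1.
Proof. by move=> z _; apply: commute_sym; apply: commute1. Qed.
Lemma HcM u v : Hc u -> Hc v -> Hc (u * v).
Proof.
move=> hu hv z wz; apply: commute_sym; apply: commuteM; apply: commute_sym.
  exact: hu. exact: hv.
Qed.
Lemma HcV u : Hc u -> Hc u^-1.
Proof.
by move=> hu z wz; apply: commute_sym; apply: commuteV; apply: commute_sym; apply: hu.
Qed.
Lemma HcX u m : Hc u -> Hc (u ^+ m).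
Proof.
move=> hu; elim: m => [|m IH]; first exact: Hc1.
by rewrite expgS; apply: HcM.
Qed.
Lemma Hca : Hc a.
Proof. by move=> z [h _]; apply: commute_sym. Qed.
Lemma Hcb : Hc b.
Proof. by move=> z [_ h]; apply: commute_sym. Qed.

Lemma kapW z u : W z -> kap (z * u) = kap u.
Proof. by move=> wz; apply/kapP; rewrite mulgK. Qed.

Variables (ks : seq (G * G)) (r : G * G -> G).
Hypothesis ks_uniq : uniq ks.
Hypothesis ks_cover : forall h, Hc h -> kap h \in ks.
Hypothesis r_spec : forall k, k \in ks -> Hc (r k) /\ kap (r k) = k.

Definition sig h k := kap (r k * h).
Definition zz h k := r k * h * (r (sig h k))^-1.
Definition Vt h := \prod_(k <- ks) zz h k.

Lemma sig_in h k : Hc h -> k \in ks -> sig h k \in ks.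
Proof. by move=> hh kk; apply: ks_cover; apply: HcM => //; case: (r_spec kk). Qed.

Lemma zzA h k : Hc h -> k \in ks -> Hc (zz h k) /\ W (zz h k).
Proof.
move=> hh kk; have [rk _] := r_spec kk.
have [rs rs2] := r_spec (sig_in hh kk).
split; first by apply: HcM; [apply: HcM | apply: HcV].
by apply/kapP; rewrite rs2.
Qed.

Lemma zz_dec h k : r k * h = zz h k * r (sig h k).
Proof. by rewrite /zz mulgVK. Qed.

Lemma sigM h h' k : Hc h -> Hc h' -> k \in ks -> sig (h * h') k = sig h' (sig h k).
Proof.
move=> hh hh' kk.
have e : r k * (h * h') = zz h k * (r (sig h k) * h') by rewrite mulgA (zz_dec h k) mulgA.
have [_ w] := zzA hh kk.
by rewrite /sig e kapW.
Qed.

Lemma zzM h h' k : Hc h -> Hc h' -> k \in ks ->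
  zz (h * h') k = zz h k * zz h' (sig h k).
Proof.
move=> hh hh' kk; rewrite {1}/zz sigM // /zz !mulgA mulgVK //.
Qed.

Lemma zz_comm h h' k k' : Hc h -> Hc h' -> k \in ks -> k' \in ks ->
  commute (zz h k) (zz h' k').
Proof.
move=> hh hh' kk kk'; have [c1 _] := zzA hh kk; have [_ w2] := zzA hh' kk'.
exact: c1.
Qed.

Lemma Vt_in h : Hc h -> Hc (Vt h) /\ W (Vt h).
Proof.
move=> hh; rewrite /Vt big_seq; apply: (big_ind (fun y => Hc y /\ W y)).
- by split; [apply: Hc1 | apply: W1].
- by move=> y1 y2 [? ?] [? ?]; split; [apply: HcM | apply: WM].
- by move=> k kk; apply: zzA.
Qed.

Lemma sig_inj h : Hc h -> {in ks &, injective (sig h)}.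
Proof.
move=> hh k k' kk kk' /kapP; rewrite invgM !mulgA mulgK => /kapP.
by case: (r_spec kk) => _ ->; case: (r_spec kk') => _ ->.
Qed.

Lemma VtM h h' : Hc h -> Hc h' -> Vt (h * h') = Vt h * Vt h'.
Proof.
move=> hh hh'.
have e : Vt (h * h') = \prod_(k <- ks | k \in ks) (zz h k * zz h' (sig h k)).
  by rewrite /Vt big_seq; apply: eq_bigr => k kk; rewrite zzM.
rewrite e prodgM_commute; last first.
  by move=> i j ii jj; apply: zz_comm => //; apply: sig_in.
rewrite -!big_seq /Vt; congr (_ * _).
rewrite -(big_map (sig h) xpredT (zz h')).
have um : uniq (map (sig h) ks) by rewrite (map_inj_in_uniq (sig_inj hh)).
have sub : {subset map (sig h) ks <= ks}.
  by move=> k /mapP [k0 k0k ->]; apply: sig_in.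
have sz : (size ks <= size (map (sig h) ks))%N by rewrite size_map.
have [_ eqm] := uniq_min_size um sub sz.
apply: perm_prod_commute; first exact: uniq_perm.
by move=> i j ii jj; apply: zz_comm => //; apply: sub.
Qed.

Lemma VtA z : Hc z -> W z -> Vt z = z ^+ size ks.
Proof.
move=> hz wz; rewrite /Vt -(prod_const_seq ks z) big_seq [RHS]big_seq.
apply: eq_bigr => k kk; have [rk rk2] := r_spec kk.
have sk : sig z k = k.
  by rewrite /sig (rk z wz) kapW.
by rewrite /zz sk (rk z wz) mulgK.
Qed.

Lemma Vt1 : Vt 1 = 1.
Proof. by rewrite VtA ?expg1n //; [apply: Hc1 | apply: W1]. Qed.

Lemma VtV h : Hc h -> Vt h^-1 = (Vt h)^-1.
Proof.
move=> hh; apply/esym/mulg1_eq; rewrite -VtM ?mulgV ?Vt1 //; exact: HcV.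
Qed.

Lemma VtX h m : Hc h -> Vt (h ^+ m) = Vt h ^+ m.
Proof.
move=> hh; elim: m => [|m IH]; first by rewrite !expg0 Vt1.
by rewrite !expgS VtM ?IH //; apply: HcX.
Qed.

Lemma Vt_comm : Vt [~ a, b] = 1.
Proof.
have ha := Hca; have hb := Hcb.
rewrite /commg /conjg !VtM ?VtV //; try by repeat first [apply: HcM | apply: HcV].
have [ca wa] := Vt_in ha; have [cb wb] := Vt_in hb.
by rewrite (ca _ wb) mulKg mulVg.
Qed.

End Transfer.

Lemma pigeon (T : eqType) (f : nat -> T) (s : seq T) :
  (forall i, f i \in s) -> exists i j, (i < j)%N /\ f i = f j.
Proof.
move=> fs; case: (pselect (exists i j, (i < j)%N /\ f i = f j)) => // nE.
have inj : {in iota 0 (size s).+1 &, injective f}.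
  move=> i j _ _ e; case: (ltngtP i j) => // lt; exfalso; apply: nE.
    by exists i, j.
  by exists j, i.
have := uniq_leq_size (s1 := map f (iota 0 (size s).+1)) (s2 := s).
rewrite map_inj_in_uniq // iota_uniq size_map size_iota => h.
have : (size s < size s)%N by apply: h => // y /mapP [i _ ->].
by rewrite ltnn.
Qed.

Lemma comm_torsion (G : groupType) (a b : G) :
  finite_set [set a ^ y | y in [set: G]] ->
  finite_set [set b ^ y | y in [set: G]] ->
  exists N, (0 < N)%N /\ [~ a, b] ^+ N = 1.
Proof.
move=> fa fb.
have fK : finite_set [set kap a b h | h in Hc a b].
  apply: (sub_finite_set _ (finite_image2 pair fa fb)).
  move=> _ [h _ <-]; exists (a ^ h); first by exists h.
  by exists (b ^ h); first by exists h.
case/finite_seqP: fK => s sE.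
pose ks := undup s.
have ks_uniq : uniq ks by apply: undup_uniq.
have cover : forall h, Hc a b h -> kap a b h \in ks.
  move=> h hh; rewrite mem_undup.
  have : [set` s] (kap a b h) by rewrite -sE; exists h.
  by [].
have : forall k, exists h, k \in ks -> Hc a b h /\ kap a b h = k.
  move=> k; case: (boolP (k \in ks)) => kk; last by exists 1.
  have : [set` s] k by rewrite /= -mem_undup.
  by rewrite -sE => -[h hh <-]; exists h.
case/choice => r rspec.
have r_spec : forall k, k \in ks -> Hc a b (r k) /\ kap a b (r k) = k.
  by move=> k kk; exact: rspec k kk.
pose c := [~ a, b].
have hc : Hc a b c.
  by rewrite /c /commg /conjg; repeat first [apply: HcM | apply: HcV | apply: Hca | apply: Hcb].
have [i [j [ij e]]] := pigeon (f := fun i => kap a b (c ^+ i)) (s := ks)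
   (fun i => cover _ (HcX i hc)).
have wz : W a b (c ^+ (j - i)).
  rewrite expgnFr; last exact: ltnW.
  by apply/kapP.
have hz := HcX (j - i) hc.
have n_gt0 : (0 < size ks)%N.
  have := cover _ (@Hc1 _ a b); by case: (ks).
exists ((j - i) * size ks)%N; split.
  by rewrite muln_gt0 subn_gt0 ij.
rewrite expgnA -(VtA r_spec hz wz) (VtX ks_uniq cover r_spec _ hc).
by rewrite (Vt_comm ks_uniq cover r_spec) expg1n.
Qed.

Section Topo.
Variable G : topGroupType.
Implicit Types x y g : G.

Lemma finite_closedG (A : set G) : hausdorff_space G -> finite_set A -> closed A.
Proof. by move=> h; apply: (accessible_finite_set_closed.1 (hausdorff_accessible h)). Qed.

Lemma dietz_set (X : set G) (N : nat) : hausdorff_space G -> (0 < N)%N ->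
  finite_set X -> (forall x y, X x -> X (x ^ y)) ->
  (forall x, X x -> x ^+ N = 1) -> finite_set (topgen X).
Proof.
move=> hH N0 /finite_seqP [xs ->] xc xe.
have xc' : forall x y, x \in xs -> x ^ y \in xs by move=> x y h; exact: xc.
have xe' : forall x, x \in xs -> x ^+ N = 1 by move=> x h; exact: xe.
apply: (sub_finite_set _ (Pw_finite xc' N0 xe')).
apply: bigcap_inf; split; first split.
- exact: Pw1.
- by move=> x y; apply: PwM.
- by move=> x; apply: (PwV N0 xe').
split; first by apply: finite_closedG => //; apply: (Pw_finite xc' N0 xe').
by move=> x xX; apply: Pw_xs.
Qed.

Lemma topgen_mono (S1 S2 : set G) : S1 `<=` S2 -> topgen S1 `<=` topgen S2.
Proof.
move=> s12; apply: sub_bigcap => H [sH [cH s2H]]; apply: bigcap_inf.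
by split => //; split => //; apply: subset_trans s2H.
Qed.

Lemma cont_mul2 (T : topologicalType) (f h : T -> G) :
  continuous (fun p : G * G => p.1 * p.2) -> continuous f -> continuous h ->
  continuous (fun t : T => f t * h t).
Proof.
move=> hm hf hh t.
exact: (@continuous2_cvg T G G G (nbhs t) _ f h (fun u v => u * v) (f t) (h t)
   (hm (f t, h t)) (hf t) (hh t)).
Qed.

Lemma cont_conj g : continuous (fun p : G * G => p.1 * p.2) ->
  continuous (fun x : G => x^-1) -> continuous (fun y : G => g ^ y).
Proof.
move=> hm hi; apply: (cont_mul2 hm hi).
apply: (cont_mul2 hm); [exact: cst_continuous | by move=> y].
Qed.

Lemma fc_rep g x : continuous (fun p : G * G => p.1 * p.2) ->
  continuous (fun x : G => x^-1) -> hausdorff_space G -> dense (FC G) ->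
  FC G g -> exists x', FC G x' /\ g ^ x' = g ^ x.
Proof.
move=> hm hi hH hd fg.
pose D := conj_class g `\ (g ^ x).
have cD : closed D.
  by apply: finite_closedG => //; apply: (sub_finite_set _ fg); apply: subDsetl.
have OE : [set y | g ^ y = g ^ x] = (fun y => g ^ y) @^-1` (~` D).
  apply/seteqP; split => y /=.
    by move=> -> [_]; apply.
  move=> nD; apply: contrapT => ne; apply: nD; split; first by exists y.
  exact: ne.
have oO : open [set y | g ^ y = g ^ x].
  by rewrite OE; apply: (continuousP _).1; [apply: cont_conj | apply: closed_openC].
have [y [Oy Fy]] := hd _ (ex_intro _ x erefl) oO.
by exists y.
Qed.

Lemma uniform_exp (ts : seq G) :
  (forall t, t \in ts -> exists N, (0 < N)%N /\ t ^+ N = 1) ->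
  exists N, (0 < N)%N /\ forall t, t \in ts -> t ^+ N = 1.
Proof.
elim: ts => [|t ts IH] h; first by exists 1%N.
have [N1 [N10 e1]] := h t (mem_head _ _).
have [N2 [N20 e2]] := IH (fun u uin => h u (@mem_behead _ (t :: ts) u uin)).
exists (N1 * N2)%N; split; first by rewrite muln_gt0 N10.
move=> u; rewrite inE => /orP [/eqP ->|uin]; first by rewrite expgnA e1 expg1n.
by rewrite mulnC expgnA e2 // expg1n.
Qed.

End Topo.

Theorem lemma2p2 (G : topGroupType) :
  profinite G -> dense (FC G) ->
  (forall g : G, FC G g -> finite_set (comm_sub [set: G] [set g])) /\
  (forall g : G, FC G g -> finite_order g ->
     finite_set (topgen (conj_class g))).
Proof.
case=> hmul hinv hcomp hH htd hd; split.
  move=> g fg; rewrite /comm_sub.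
  pose T := [set [~ x, y] | x in [set: G] & y in [set g]].
  have cE : forall x, [~ x, g] = (g ^ x)^-1 * g by move=> x; rewrite commgEr conjVg.
  have tor : forall t, T t -> exists N, (0 < N)%N /\ t ^+ N = 1.
    move=> _ [x _ [_ -> <-]].
    have [x' [fx' e]] := fc_rep x hmul hinv hH hd fg.
    have [N [N0 hN]] := comm_torsion fx' fg.
    by exists N; split => //; rewrite cE -e -cE.
  have fT : finite_set T.
    apply: (sub_finite_set _ (finite_image (fun w => w^-1 * g) fg)).
    by move=> _ [x _ [_ -> <-]]; exists (g ^ x); [exists x | rewrite cE].
  case/finite_seqP: (fT) => ts TE.
  have [N [N0 hN]] : exists N, (0 < N)%N /\ forall t, t \in ts -> t ^+ N = 1.
    by apply: uniform_exp => t tin; apply: tor; rewrite TE.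
  pose X := [set t ^ y | t in T & y in [set: G]].
  apply: (sub_finite_set (topgen_mono (S2 := X) _)).
    by move=> t Tt; exists t => //; exists 1 => //; rewrite conjg1.
  apply: (dietz_set hH N0).
  - apply: (sub_finite_set _ (finite_image2 (fun u v => u * v)
       (finite_image (fun w => w^-1) fg) fg)).
    move=> _ [_ [x _ [_ -> <-]] [y _ <-]].
    exists ((g ^ (x * y))^-1); first by exists (g ^ (x * y)) => //; exists (x * y).
    exists (g ^ y); first by exists y.
    by rewrite cE conjMg conjVg conjgM.
  - by move=> _ z [t Tt [y _ <-]]; exists t => //; exists (y * z) => //; rewrite conjgM.
  - move=> _ [t Tt [y _ <-]]; rewrite -conjXg hN ?conj1g //.
    by have : [set` ts] t by rewrite -TE.
move=> g fg [n [n0 gn]].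
apply: (dietz_set hH n0 fg).
- by move=> _ y [z _ <-]; exists (z * y) => //; rewrite conjgM.
- by move=> _ [z _ <-]; rewrite -conjXg gn conj1g.
Qed.
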